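(* Consider a FIFO system in which packets, numbered $1,2,\dots$ in order of arrival, with sizes $l_k$, arrive at times $A_1\le A_2\le\cdots$ and packet $n$ starts its service at time $Q_n$, service being non-preemptive and in order. If the system offers a service curve $\beta$, then for each packet $n$ there exists $m\le n$ such that $$\beta(Q_n-A_m)\le\sum_{k=m}^{n-1}l_k.$$
   Context: $N(t)$ denotes the number of bits that have arrived up to time $t$ and $O(t)$ the number of bits served up to time $t$ (so that just after $Q_n$ the output equals $l_1+\dots+l_{n-1}$). A function $\beta:[0,\infty)\to[0,\infty)$, wide-sense increasing, is a service curve for the system if for every $t$ there exists $s\le t$ with $O(t)\ge N(s)+\beta(t-s)$. An empty sum equals $0$. *)

(* Defs.v *)
From HB Require Import structures.
From mathcomp Require Import all_boot all_order all_algebra.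
From mathcomp Require Import boolp classical_sets reals constructive_ereal ereal esum.
Set Implicit Arguments. Unset Strict Implicit. Unset Printing Implicit Defensive.
Import Order.TTheory GRing.Theory Num.Theory.
Local Open Scope ring_scope.
Local Open Scope classical_set_scope.
Local Open Scope ereal_scope.

(* N(t) = number of bits arrived up to time t (arrival counted at A k <= t),
   as an extended real (a possibly infinite sum of nonnegative sizes). *)
Definition arrived {R : realType} (A l : nat -> R) (t : R) : \bar R :=
  \esum_(k in [set k : nat | (0 < k)%N /\ (A k <= t)%R]) (l k)%:E.

Definition service_curve {R : realType} (N : R -> \bar R) (O : R -> R)
    (beta : R -> R) : Prop :=
  forall t : R, (0 <= t)%R ->
    exists s : R, [/\ (0 <= s)%R, (s <= t)%R &
      N s + (beta (t - s))%:E <= (O t)%:E].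

(* Main.v *)
Require Import Defs.
From HB Require Import structures.
From mathcomp Require Import all_boot all_order all_algebra.
From mathcomp Require Import boolp classical_sets reals constructive_ereal ereal esum.
From mathcomp Require Import fsbigop cardinality.
From mathcomp Require Import lra.
Import Order.TTheory GRing.Theory Num.Theory.
Local Open Scope ring_scope.

Lemma arrived_ge (R : realType) (A l : nat -> R) s m :
  (forall k, (0<k)%N -> (k<m)%N -> A k <= s) ->
  ((\sum_(1<=k<m) l k)%:E <= arrived A l s)%E.
Proof.
move=> H; rewrite /arrived; apply: esum_ge.
exists [set` index_iota 1 m]%classic.
  split; first exact: finite_seq.
  move=> k /=; rewrite mem_index_iota => /andP[k1 km]; split => //; exact: H.
by rewrite -fsbig_seq ?iota_uniq // sumEFin.
Qed.

Lemma A_mono (R : realType) (A : nat -> R)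
  (hA : forall k, (0 < k)%N -> A k <= A k.+1) i j :
  (0 < i)%N -> (i <= j)%N -> A i <= A j.
Proof.
move=> i0; elim: j => [|j IH]; first by rewrite leqn0 => /eqP ?; subst.
rewrite leq_eqVlt => /orP[/eqP -> //|]; rewrite ltnS => ij.
apply: le_trans (IH ij) _; apply: hA; exact: leq_trans ij.
Qed.

Theorem lemma2 (R : realType) (A Q l : nat -> R) (O : R -> R) (beta : R -> R)
  (hl : forall k, (0 < k)%N -> 0 < l k)
  (hA0 : 0 <= A 1%N)
  (hA : forall k, (0 < k)%N -> A k <= A k.+1)
  (hAQ : forall k, (0 < k)%N -> A k <= Q k)
  (hQ : forall k, (0 < k)%N -> Q k <= Q k.+1)
  (hO : forall x y, x <= y -> O x <= O y)
  (hOQ : forall n, (0 < n)%N -> O (Q n) = \sum_(1 <= k < n) l k)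
  (hbeta0 : forall x, 0 <= x -> 0 <= beta x)
  (hbeta : forall x y, 0 <= x -> x <= y -> beta x <= beta y)
  (hsc : service_curve (arrived A l) O beta) :
  forall n, (0 < n)%N ->
    exists m, [/\ (0 < m)%N, (m <= n)%N &
      beta (Q n - A m) <= \sum_(m <= k < n) l k].
Proof.
move=> n n0.
have AnQ : A n <= Q n := hAQ n n0.
have Qn0 : 0 <= Q n := le_trans hA0 (le_trans (@A_mono _ _ hA 1 n isT n0) AnQ).
have [s [s0 sQ hs]] := hsc (Q n) Qn0.
rewrite hOQ // in hs.
have key : forall m, (forall k, (0<k)%N -> (k<m)%N -> A k <= s) ->
    \sum_(1<=k<m) l k + beta (Q n - s) <= \sum_(1 <= k < n) l k.
  move=> m Hm; rewrite -lee_fin EFinD.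
  apply: le_trans hs; rewrite leeD2r //; exact: arrived_ge.
pose P k := [&& (0 < k)%N, (k <= n)%N & s < A k].
have [ex|nex] := pselect (exists k, P k); last first.
  exfalso.
  have bpos : 0 <= beta (Q n - s) by apply: hbeta0; rewrite subr_ge0.
  have ln := hl n n0.
  have H : \sum_(1 <= i < n.+1) l i + beta (Q n - s) <= \sum_(1 <= k < n) l k.
    apply: key => k k0 kn; rewrite leNgt; apply/negP => sk; apply: nex; exists k.
    by rewrite /P k0 -ltnS kn sk.
  by move: H; rewrite big_nat_recr //=; lra.
pose m := ex_minn ex.
have [Pm minm] : P m /\ forall k, P k -> (m <= k)%N.
  by rewrite /m; case: ex_minnP.
move/and3P: Pm => [m0 mn sm].
exists m; split => //.
have H2 : \sum_(1 <= i < m) l i + beta (Q n - s) <=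
   \sum_(1 <= i < m) l i + \sum_(m <= i < n) l i.
  rewrite -(@big_cat_nat _ _ _ m 1 n _ _ m0 mn); apply: key => k k0 km; rewrite leNgt; apply/negP => sk.
  have := minm k; rewrite /P k0 sk (ltnW (leq_trans km mn)) /= => /(_ isT).
  by rewrite leqNgt km.
have H3 : beta (Q n - A m) <= beta (Q n - s).
  apply: hbeta; first by rewrite subr_ge0 (le_trans (@A_mono _ _ hA _ _ m0 mn)).
  by rewrite lerD2l lerN2 ltW.
move: H2; rewrite lerD2l; exact: le_trans.
Qed.
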